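(* Let $(X,0)$ be a pointed CFG-space over a Boolean algebra $B$, and let $U_1,U_2\subset X$ be subsets which are CFG-spaces with the restricted metric and satisfy $0\in U_1\cap U_2$. If $U_1$ is isometric to $U_2$, then $U_1^\perp$ is isometric to $U_2^\perp$.
   Context: A Boolean metric space over $B$ is a set $X$ with symmetric $d:X\times X\to B$, $d(x,y)=0$ iff $x=y$, and $d(x,z)\le d(x,y)\vee d(y,z)$. An isometry is a bijection preserving $d$. A partition of $B$ is a finite family of pairwise disjoint elements with supremum $1$; $x$ is a convex combination of $x_0,\dots,x_n$ with coefficients a partition $a_0,\dots,a_n$ if $a_i\wedge d(x,x_i)=0$ for all $i$. A CFG-space is a Boolean metric space that is convex (every such convex combination of its points exists in it) and finitely generated (some finite subset $S$ has every point as a convex combination of points of $S$). A pointed space is a pair $(X,0)$ with $0\in X$ a fixed point; write $|x|=d(x,0)$. Elements $x,y$ are orthogonal, $x\perp y$, if $d(x,y)=|x|\vee|y|$. For $U\subset X$ with $0\in U$, $U^\perp=\{y\in X: x\perp y\ \forall x\in U\}$ (with the restricted metric). *)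

(* Defs.v *)
(* A Boolean algebra is a ctbDistrLatticeType
   (complemented distributive lattice with top and bottom). *)
From HB Require Import structures.
From mathcomp Require Import all_boot all_order.
From Stdlib Require List.
Set Implicit Arguments. Unset Strict Implicit. Unset Printing Implicit Defensive.
Import Order.TTheory.
Local Open Scope order_scope.

Section BoolMetric.
Context {disp : Order.disp_t} {B : ctbDistrLatticeType disp} {T : Type}.
Variable d : T -> T -> B.

Definition bool_metric : Prop :=
  [/\ forall x y, d x y = d y x,
      forall x y, d x y = \bot <-> x = y
    & forall x y z, d x z <= d x y `|` d y z].

Definition bpartition (a : seq B) : Prop :=
  (forall i j, (i < size a)%N -> (j < size a)%N -> i <> j ->
     nth \bot a i `&` nth \bot a j = \bot) /\
  \join_(b <- a) b = \top.

(* x is a convex combination of the points ps.2 with coefficients ps.1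
   (the coefficients are assumed to form a partition separately). *)
Definition convex_comb (x : T) (ps : seq (B * T)%type) : Prop :=
  forall p, List.In p ps -> p.1 `&` d x p.2 = \bot.

Definition bconvex (A : T -> Prop) : Prop :=
  forall ps : seq (B * T)%type, bpartition (map fst ps) ->
    (forall p, List.In p ps -> A p.2) ->
    exists x, A x /\ convex_comb x ps.

Definition fin_gen (A : T -> Prop) : Prop :=
  exists S : seq T, (forall s, List.In s S -> A s) /\
    forall x, A x -> exists ps : seq (B * T)%type,
      [/\ bpartition (map fst ps), (forall p, List.In p ps -> List.In p.2 S)
        & convex_comb x ps].

Definition CFG (A : T -> Prop) : Prop := bconvex A /\ fin_gen A.

Definition isometric (A1 A2 : T -> Prop) : Prop :=
  exists f : {x | A1 x} -> {x | A2 x},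
    bijective f /\
    forall x y, d (proj1_sig (f x)) (proj1_sig (f y)) = d (proj1_sig x) (proj1_sig y).

Definition orth (o x y : T) : Prop := d x y = d x o `|` d y o.

Definition perp (o : T) (U : T -> Prop) : T -> Prop :=
  fun y => forall x, U x -> orth o x y.

End BoolMetric.

(* Main.v *)
Require Import Defs.
From HB Require Import structures.
From mathcomp Require Import all_boot all_order.
From Stdlib Require List ProofIrrelevance ClassicalEpsilon.
Set Implicit Arguments. Unset Strict Implicit. Unset Printing Implicit Defensive.
Import Order.Theory.
Local Open Scope order_scope.

Section Lat.
Context {disp : Order.disp_t} {B : ctbDistrLatticeType disp}.

Lemma bot_le (y z : B) : y <= z -> z = \bot -> y = \bot.
Proof. by move=> h hz; apply/eqP; rewrite -lex0 -hz. Qed.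

Fixpoint pdisj (l : seq B) : Prop :=
  match l with [::] => True | x :: l' => x `&` \join_(b <- l') b = \bot /\ pdisj l' end.
Definition part (l : seq B) := pdisj l /\ \join_(b <- l) b = \top.

Lemma le_join_mem x (l : seq B) : x \in l -> x <= \join_(b <- l) b.
Proof.
elim: l => [|y l IH] //=; rewrite inE big_cons => /orP [/eqP->|h]; first exact: leUl.
exact: le_trans (IH h) (leUr _ _).
Qed.

Lemma meet_join_bot x (l : seq B) : (forall y, y \in l -> x `&` y = \bot) ->
  x `&` \join_(b <- l) b = \bot.
Proof.
elim: l => [|y l IH] h; first by rewrite big_nil meetx0.
rewrite big_cons meetUr h ?inE ?eqxx // IH ?join0x // => z hz.
by apply: h; rewrite inE hz orbT.
Qed.

Lemma meet_joinr x (l : seq B) : x `&` \join_(b <- l) b = \join_(b <- l) (x `&` b).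
Proof.
by elim: l => [|y l IH]; rewrite ?big_nil ?meetx0 // !big_cons meetUr IH.
Qed.

Lemma pdisj_nth (l : seq B) : pdisj l <->
  (forall i j, (i < size l)%N -> (j < size l)%N -> i <> j ->
     nth \bot l i `&` nth \bot l j = \bot).
Proof.
split.
- elim: l => [|x l IH] //= [hx hl] i j.
  have key : forall k, (k < size l)%N -> x `&` nth \bot l k = \bot.
    move=> k hk; apply: bot_le hx; apply: leI2 => //; apply: le_join_mem.
    exact: mem_nth.
  case: i => [|i]; case: j => [|j] //= hi hj hij.
  + exact: key.
  + by rewrite meetC key.
  + by apply: IH => // ?; apply: hij; congr S.
- elim: l => [|x l IH] //= h; split.
  + apply: meet_join_bot => y hy.
    have := h 0%N (index y l).+1 isT; rewrite /= nth_index // => -> //.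
    by rewrite ltnS index_mem.
  + by apply: IH => i j hi hj hij; apply: (h i.+1 j.+1) => // -[].
Qed.

Lemma bpart_part (l : seq B) : bpartition l <-> part l.
Proof. by rewrite /bpartition /part pdisj_nth. Qed.

Lemma local_eq (l : seq B) (u v : B) : \join_(b <- l) b = \top ->
  (forall c, c \in l -> c `&` u = c `&` v) -> u = v.
Proof.
move=> hj h; rewrite -[u]meet1x -[v]meet1x -hj.
elim: l h {hj} => [|x l IH] h; first by rewrite big_nil !meet0x.
rewrite big_cons !meetUl h ?inE ?eqxx // IH // => c hc.
by apply: h; rewrite inE hc orbT.
Qed.

Lemma pdisj_map c (l : seq B) : pdisj l -> pdisj [seq c `&` b | b <- l].
Proof.
elim: l => [|x l IH] //= [hx hl]; split; last exact: IH.
rewrite big_map -meet_joinr; apply: bot_le hx.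
by apply: leI2; [exact: leIr | exact: leIr].
Qed.

Lemma join_map c (l : seq B) : \join_(b <- [seq c `&` b | b <- l]) b = c `&` \join_(b <- l) b.
Proof. by rewrite big_map meet_joinr. Qed.

Lemma pdisj_cat (l1 l2 : seq B) : pdisj l1 -> pdisj l2 ->
  \join_(b <- l1) b `&` \join_(b <- l2) b = \bot -> pdisj (l1 ++ l2).
Proof.
elim: l1 => [|x l1 IH] //= [hx hl1] hl2 h; split.
- rewrite big_cat meetUr hx join0x; apply: bot_le h.
  by apply: leI2 => //; rewrite big_cons; exact: leUl.
- apply: IH => //; apply: bot_le h; apply: leI2 => //; rewrite big_cons; exact: leUr.
Qed.

Lemma allp_cons (f : B -> B -> B) x s t : [seq f x' y | x' <- x :: s, y <- t] = [seq f x y | y <- t] ++ [seq f x' y | x' <- s, y <- t].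
Proof. by []. Qed.

Lemma join_allpairs (l1 l2 : seq B) :
  \join_(b <- [seq c `&` b | c <- l1, b <- l2]) b = \join_(b <- l1) b `&` \join_(b <- l2) b.
Proof.
elim: l1 => [|x l1 IH]; first by rewrite big_nil meet0x.
by rewrite allp_cons
 big_cat IH join_map big_cons meetUl.
Qed.

Lemma part_allpairs (l1 l2 : seq B) : part l1 -> part l2 ->
  part [seq c `&` b | c <- l1, b <- l2].
Proof.
move=> [d1 j1] [d2 j2]; split; last by rewrite join_allpairs j1 j2 meetxx.
elim: l1 d1 {j1} => [|x l1 IH] // [hx hl1].
rewrite allp_cons; apply: pdisj_cat; [exact: pdisj_map | exact: IH |].
rewrite join_map join_allpairs; apply: bot_le hx.
by apply: leI2; [exact: leIl | exact: leIl].
Qed.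

Lemma pdisj_mem (l : seq B) a b : pdisj l -> a \in l -> b \in l -> a != b -> a `&` b = \bot.
Proof.
elim: l => [|x l IH] //= [hx hl]; rewrite !inE.
have key : forall y, y \in l -> x `&` y = \bot.
  by move=> y hy; apply: bot_le hx; apply: leI2 => //; exact: le_join_mem.
case/orP=> [/eqP->|ha]; case/orP=> [/eqP->|hb]; rewrite ?eqxx //.
- by move=> _; apply: key.
- by move=> _; rewrite meetC; apply: key.
- by apply: IH.
Qed.

Fixpoint atoms (es : seq B) : seq B :=
  match es with
  | [::] => [:: \top]
  | e :: es' => [seq e `&` c | c <- atoms es'] ++ [seq ~` e `&` c | c <- atoms es']
  end.

Lemma part_atoms es : part (atoms es).
Proof.
elim: es => [|e es [hd hj]] /=.
  by split; [split; [rewrite big_nil meetx0|] | rewrite big_cons big_nil joinx0].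
split.
- apply: pdisj_cat; try exact: pdisj_map.
  rewrite !join_map; apply: bot_le (meetxC e).
  by apply: leI2; exact: leIl.
- by rewrite big_cat !join_map hj !meetx1; exact: joinxC.
Qed.

Lemma atoms_prop es e c : e \in es -> c \in atoms es -> e `&` c = \bot \/ e `&` c = c.
Proof.
elim: es c => [|e0 es IH] c //=; rewrite inE mem_cat => he /orP[] /mapP [c' hc' ->].
- case/orP: he => [/eqP->|he]; first by right; rewrite meetA meetxx.
  by case: (IH _ he hc') => h; [left|right]; rewrite meetCA h ?meetx0.
- case/orP: he => [/eqP->|he]; first by left; rewrite meetA meetxC meet0x.
  by case: (IH _ he hc') => h; [left|right]; rewrite meetCA h ?meetx0.
Qed.

End Lat.
Local Close Scope order_scope.
Section Comb.
Variable I : finType.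
Variable E : rel I.
Hypotheses (Erefl : reflexive E) (Esym : symmetric E) (Etrans : transitive E).

Definition rep i := odflt i [pick j | E i j].

Lemma rep_E i : E i (rep i).
Proof. by rewrite /rep; case: pickP => [j|/(_ i)] /=; rewrite ?Erefl. Qed.

Lemma rep_eq i j : E i j -> rep i = rep j.
Proof.
move=> hij; have heq : [pick k | E i k] = [pick k | E j k].
  apply: eq_pick => k; apply/idP/idP => h.
  - by apply: Etrans h; rewrite Esym.
  - exact: Etrans h.
rewrite /rep heq; case: pickP => [//|/(_ j)]; by rewrite Erefl.
Qed.

Lemma repE i j : (rep i == rep j) = E i j.
Proof.
apply/eqP/idP => [h|]; last exact: rep_eq.
apply: (Etrans (rep_E i)); rewrite h Esym; exact: rep_E.
Qed.

Lemma rep_rep i : rep (rep i) = rep i.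
Proof. by apply: rep_eq; rewrite Esym rep_E. Qed.

Lemma card_kernel (F1 F2 : I -> I) (P : pred I) :
  {in P &, forall a b, (F1 a == F1 b) = (F2 a == F2 b)} ->
  #|F1 @: P| = #|F2 @: P|.
Proof.
suff H : forall F1 F2 : I -> I, {in P &, forall a b, (F1 a == F1 b) = (F2 a == F2 b)} ->
  #|F2 @: P| <= #|F1 @: P|.
  by move=> h; apply/eqP; rewrite eqn_leq !H // => a b ha hb; rewrite h.
move=> G1 G2 h.
pose Psi x := if [pick p in P | G1 p == x] is Some p then G2 p else x.
have -> : G2 @: P = Psi @: (G1 @: P).
  rewrite -imset_comp; apply: eq_in_imset => p hp /=; rewrite /Psi.
  case: pickP => [q /andP[hq e]|/(_ p)]; last by rewrite hp eqxx.
  by apply/eqP; rewrite -h // eq_sym.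
exact: (leq_imset_card Psi (G1 @: P)).
Qed.

Variables (P : pred I) (z : I).
Hypothesis Pz : P z.

Definition Aset (psi : I -> I) : pred I :=
  [pred i | E i z || [forall p, P p ==> ~~ E i (psi p)]].

Lemma Aset_closed psi x w : E x w -> Aset psi w -> Aset psi x.
Proof.
move=> hxw /orP [hw|/forallP hw]; apply/orP; first by left; exact: Etrans hw.
right; apply/forallP => p; apply/implyP => hp; apply/negP => hx.
have := hw p; rewrite hp /= => /negP; apply; apply: Etrans hx; by rewrite Esym.
Qed.

Lemma Rset_mem psi x : x \in [set rep i | i in Aset psi] -> Aset psi x /\ rep x = x.
Proof.
case/imsetP => i hi ->; split; last exact: rep_rep.
by apply: Aset_closed hi; rewrite Esym rep_E.
Qed.

Lemma cardA psi p1 : P p1 -> E z (psi p1) ->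
  #|[set rep i | i in Aset psi]| = 
  (1 + (#|rep @: [set: I]| - #|[set rep (psi p) | p in P]|))%N.
Proof.
move=> hp1 hz.
set S := [set rep (psi p) | p in P].
have hzS : rep z \in S by apply/imsetP; exists p1 => //; apply: rep_eq.
have sub : S \subset rep @: [set: I].
  by apply/subsetP => x /imsetP [p _ ->]; apply: imset_f; rewrite in_setT.
have -> : [set rep i | i in Aset psi] = rep z |: (rep @: [set: I] :\: S).
  apply/setP => x; rewrite in_setU1 in_setD; apply/idP/idP.
  - case/imsetP => i /orP [hi|/forallP hi] ->.
      by rewrite (rep_eq hi) eqxx.
    apply/orP; right; rewrite imset_f ?in_setT // andbT; apply/negP.
    case/imsetP => p hp /eqP; rewrite repE => e.
    have {}hp : P p := hp; by have := hi p; rewrite hp e.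
  - case/orP => [/eqP ->|/andP [hS /imsetP [i _ ex]]].
      by apply: imset_f; apply/orP; left; exact: Erefl.
    rewrite ex; apply: imset_f; apply/orP; right; apply/forallP => p; apply/implyP => hp.
    apply/negP => e; move/negP: hS; apply; apply/imsetP; exists p => //.
    rewrite ex; exact: rep_eq.
rewrite cardsU1 in_setD hzS /= cardsD; congr (_ + (_ - _))%N.
by rewrite (setIidPr sub).
Qed.

Variables (phi : I -> I) (p1 : I).
Hypotheses (Pp1 : P p1) (Ephi : E z (phi p1))
  (Phi_iso : {in P &, forall a b, E (phi a) (phi b) = E a b}).

Lemma comb : exists h : I -> I,
  [/\ forall i, Aset id i -> Aset phi (h i),
      forall i j, Aset id i -> Aset id j -> E (h i) (h j) = E i j
    & forall w, Aset phi w -> exists2 i, Aset id i & E (h i) w].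
Proof.
set R1 := [set rep i | i in Aset id].
set R2 := [set rep i | i in Aset phi].
have hcard : #|R1| = #|R2|.
  rewrite /R1 /R2 (cardA (psi := id) Pz) ?Erefl // (cardA Pp1 Ephi).
  congr (1 + (_ - _))%N; apply: card_kernel => a b ha hb /=.
  by rewrite !repE Phi_iso.
set e1 := enum R1; set e2 := enum R2.
have hsz : size e1 = size e2 by rewrite /e1 /e2 -!cardE.
exists (fun i => nth z e2 (index (rep i) e1)).
have inR1 : forall i, Aset id i -> rep i \in e1.
  by move=> i hi; rewrite mem_enum; apply: imset_f.
have hlt : forall i, Aset id i -> (index (rep i) e1 < size e2)%N.
  by move=> i hi; rewrite -hsz index_mem inR1.
have inR2 : forall i, Aset id i -> nth z e2 (index (rep i) e1) \in R2.
  by move=> i hi; rewrite -mem_enum; apply: mem_nth; apply: hlt.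
split.
- by move=> i hi; case: (Rset_mem (inR2 i hi)).
- move=> i j hi hj.
  case: (Rset_mem (inR2 i hi)) => _ ri; case: (Rset_mem (inR2 j hj)) => _ rj.
  rewrite -repE ri rj nth_uniq ?hlt ?enum_uniq // -repE.
  apply/eqP/eqP => [h|->] //.
  by rewrite -(nth_index z (inR1 i hi)) h nth_index // inR1.
- move=> w hw.
  have hwR : rep w \in e2 by rewrite mem_enum; apply: imset_f.
  set k := index (rep w) e2.
  have hk : (k < size e1)%N by rewrite hsz index_mem.
  set u := nth z e1 k.
  have hu : u \in R1 by rewrite -mem_enum mem_nth.
  case: (Rset_mem hu) => Au ru.
  exists u => //.
  rewrite ru index_uniq ?enum_uniq // /k nth_index //; rewrite Esym; exact: rep_E.
Qed.

End Comb.

Local Open Scope order_scope.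

Section Metric.
Context {disp : Order.disp_t} {B : ctbDistrLatticeType disp} {T : Type} (d : T -> T -> B).
Hypothesis hd : bool_metric d.

Lemma dsym x y : d x y = d y x.
Proof. by case: hd. Qed.

Lemma dxx x : d x x = \bot.
Proof. by case: hd => _ h _; apply/h. Qed.

Lemma dtri x y z : d x z <= d x y `|` d y z.
Proof. by case: hd. Qed.

Lemma transl a x x' y : a `&` d x x' = \bot -> a `&` d x y = a `&` d x' y.
Proof.
have gen : forall x x', a `&` d x x' = \bot -> a `&` d x y <= a `&` d x' y.
  move=> u u' h; apply: le_trans (leI2 (lexx a) (dtri u u' y)) _.
  by rewrite meetUr h join0x.
move=> h; apply: le_anti; rewrite gen //=; apply: gen; by rewrite dsym.
Qed.

Lemma transr a x y y' : a `&` d y y' = \bot -> a `&` d x y = a `&` d x y'.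
Proof. by move=> h; rewrite dsym (transl _ h) dsym. Qed.

Lemma meet_le_bot (a a' b : B) : a `&` b = \bot -> a' <= a -> a' `&` b = \bot.
Proof. by move=> h le; apply: bot_le h; apply: leI2. Qed.

End Metric.

Section Main.
Context {disp : Order.disp_t} {B : ctbDistrLatticeType disp} {T : Type} (d : T -> T -> B).
Hypothesis hd : bool_metric d.
Variables (I : finType) (g : I -> T) (o : T).

Definition Rep x (qs : seq (B * I)) :=
  part (map fst qs) /\ forall q, q \in qs -> q.1 `&` d x (g q.2) = \bot.

Variable ats : seq B.
Hypothesis hats : part ats.
Hypothesis hatom : forall c, c \in ats -> forall i j,
  d (g i) (g j) `&` c = \bot \/ d (g i) (g j) `&` c = c.

Definition Ec (c : B) : rel I := fun i j => d (g i) (g j) `&` c == \bot.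

Lemma Ec_refl c : reflexive (Ec c).
Proof. by move=> i; rewrite /Ec dxx // meet0x. Qed.
Lemma Ec_sym c : symmetric (Ec c).
Proof. by move=> i j; rewrite /Ec (dsym hd). Qed.
Lemma Ec_trans c : transitive (Ec c).
Proof.
move=> j i k; rewrite /Ec => /eqP h1 /eqP h2; apply/eqP; apply: bot_le (leI2 (dtri hd _ (g j) _) (lexx c)) _.
by rewrite meetUl h1 h2 joinx0.
Qed.

Lemma Ec_congr c i j k : Ec c i j -> Ec c i k = Ec c j k.
Proof.
move=> h; apply/idP/idP => h'.
- by apply: Ec_trans h'; rewrite Ec_sym.
- exact: Ec_trans h'.
Qed.

Lemma piece c (a : B) i j : c \in ats -> a <= c ->
  a `&` d (g i) (g j) = if Ec c i j then \bot else a.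
Proof.
move=> hc hac; rewrite /Ec; have := hatom hc i j.
have -> : a `&` d (g i) (g j) = a `&` (d (g i) (g j) `&` c).
  by rewrite [d _ _ `&` c]meetC meetA (meet_idPl hac).
case=> ->; rewrite ?eqxx ?meetx0 //; case: eqP => [->|_]; [by rewrite meetx0|exact: (meet_idPl hac)].
Qed.

Variables (P : pred I) (z : I).
Hypothesis gz : g z = o.

Section Side.
Variables (V : T -> Prop) (psi : I -> I).
Hypotheses (hVg : forall p, P p -> V (g (psi p)))
  (hVr : forall u, V u -> exists qs, Rep u [seq (q.1, psi q.2) | q <- qs] /\ forall q, q \in qs -> P q.2)
  (hzo : exists2 p, P p & g (psi p) = o).

Lemma L1 x qs c q : perp d o V x -> Rep x qs -> q \in qs -> c \in ats ->
  c `&` q.1 != \bot -> Aset (Ec c) P z psi q.2.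
Proof.
move=> hx [_ hq] qin hc hne.
apply/orP; case: (boolP [forall p, P p ==> ~~ Ec c q.2 (psi p)]) => hf; [by right|left].
move/forallPn: hf => [p]; rewrite negb_imply negbK => /andP [hp hE].
set a := c `&` q.1.
have hax : a `&` d x (g q.2) = \bot by apply: meet_le_bot (hq _ qin) _; exact: leIr.
have horth := hx _ (hVg hp); rewrite /orth in horth.
have h1 : a `&` d (g (psi p)) x = \bot.
  rewrite (transr hd (g (psi p)) hax) (piece _ _ hc) ?leIl //.
  by rewrite Ec_sym hE.
have h2 : a `&` d x o = \bot.
  by apply: bot_le h1; rewrite horth; apply: leI2 => //; exact: leUr.
have h3 : a `&` d (g q.2) (g z) = \bot by rewrite gz -(transl hd _ hax).
move: h3; rewrite (piece _ _ hc) ?leIl //; case: (Ec c q.2 z) => //.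
by move=> ha; move: hne; rewrite -/a ha eqxx.
Qed.

Lemma L2 y rs : Rep y rs ->
  (forall r c, r \in rs -> c \in ats -> c `&` r.1 != \bot -> Aset (Ec c) P z psi r.2) ->
  perp d o V y.
Proof.
move=> [hrp hr] hA u hu; rewrite /orth.
case: (hVr hu) => qs [[hqp hq] hP].
apply: (local_eq hats.2) => c hc.
apply: (local_eq hrp.2) => b /mapP [r rin ->].
apply: (local_eq hqp.2) => e /mapP [q' /mapP [q qin ->] ->] /=.
rewrite !meetA; set pi := (q.1 `&` r.1) `&` c.
have hpic : pi <= c by exact: leIr.
have pu : pi `&` d u (g (psi q.2)) = \bot.
  apply: meet_le_bot (hq (q.1, psi q.2) _) _; first by apply/mapP; exists q.
  by rewrite /pi -meetA; exact: leIl.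
have py : pi `&` d y (g r.2) = \bot.
  apply: meet_le_bot (hr r rin) _; rewrite /pi meetAC; exact: leIr.
case: (eqVneq (c `&` r.1) \bot) => hcr.
  have -> : pi = \bot by rewrite /pi -meetA [r.1 `&` c]meetC hcr meetx0.
  by rewrite !meet0x.
have hAr := hA r c rin hc hcr.
rewrite (transl hd y pu) (transr hd (g (psi q.2)) py) meetUr (transl hd o pu).
rewrite [pi `&` d y o](transl hd o py) -gz !(piece _ _ hc hpic).
case/orP: hAr => [hz|/forallP hf].
  by rewrite Ec_sym hz joinx0 (Ec_congr _ hz) Ec_sym.
have hn := hf q.2; rewrite (hP q qin) /= in hn.
case: hzo => p0 hp0 gp0.
have hn0 := hf p0; rewrite hp0 /= in hn0.
rewrite Ec_sym (negbTE hn).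
have -> : Ec c r.2 z = Ec c r.2 (psi p0) by rewrite /Ec gp0 gz.
rewrite (negbTE hn0); case: ifP => _; by rewrite ?join0x ?joinxx.
Qed.
End Side.

Lemma map_fst_allp (F : B -> I -> I) (l1 : seq B) (l2 : seq (B * I)) :
  map fst [seq (c `&` q.1, F c q.2) | c <- l1, q <- l2] = [seq c `&` b | c <- l1, b <- map fst l2].
Proof.
elim: l1 => [|c l1 IH] //=; rewrite map_cat IH -map_comp; congr (_ ++ _).
by rewrite -map_comp.
Qed.

Lemma sig_eq (A : Type) (Q : A -> Prop) (a b : {x | Q x}) : proj1_sig a = proj1_sig b -> a = b.
Proof.
case: a b => [a ha] [b hb] /= e; subst b; congr exist; exact: ProofIrrelevance.proof_irrelevance.
Qed.

Lemma pair_eta (qs : seq (B * I)) : [seq (q.1, q.2) | q <- qs] = qs.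
Proof. by elim: qs => [|[a b] l IH] //=; rewrite IH. Qed.

Variables (phi : I -> I) (p1 : I).
Hypotheses (Pz : P z) (Pp1 : P p1) (gp1 : g (phi p1) = o)
  (hphi : forall a b, P a -> P b -> d (g (phi a)) (g (phi b)) = d (g a) (g b)).
Hypothesis hbuild : forall qs : seq (B * I), part (map fst qs) -> exists x, Rep x qs.
Hypothesis hrep : forall x, exists qs, Rep x qs.
Variables V1 V2 : T -> Prop.
Hypotheses (hV1g : forall p, P p -> V1 (g p)) (hV2g : forall p, P p -> V2 (g (phi p)))
  (hV1r : forall u, V1 u -> exists qs, Rep u qs /\ forall q, q \in qs -> P q.2)
  (hV2r : forall u, V2 u -> exists qs, Rep u [seq (q.1, phi q.2) | q <- qs] /\ forall q, q \in qs -> P q.2).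

Let hV1r' : forall u, V1 u -> exists qs, Rep u [seq (q.1, (fun x => x) q.2) | q <- qs] /\ forall q, q \in qs -> P q.2.
Proof. by move=> u /hV1r [qs h]; exists qs; rewrite pair_eta. Qed.
Let hz1 : exists2 p, P p & g ((fun x => x) p) = o.
Proof. by exists z. Qed.
Let hz2 : exists2 p, P p & g (phi p) = o.
Proof. by exists p1. Qed.

Lemma Hex c : exists h : I -> I,
  [/\ forall i, Aset (Ec c) P z (fun x => x) i -> Aset (Ec c) P z phi (h i),
      forall i j, Aset (Ec c) P z (fun x => x) i -> Aset (Ec c) P z (fun x => x) j ->
        Ec c (h i) (h j) = Ec c i j
    & forall w, Aset (Ec c) P z phi w -> exists2 i, Aset (Ec c) P z (fun x => x) i & Ec c (h i) w].
Proof.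
apply: (comb (@Ec_refl c) (@Ec_sym c) (@Ec_trans c) Pz Pp1).
- by rewrite /Ec gz gp1 dxx // meet0x.
- by move=> a b ha hb; rewrite /Ec hphi.
Qed.

Definition H c := proj1_sig (ClassicalEpsilon.constructive_indefinite_description _ (Hex c)).
Definition HP c := proj2_sig (ClassicalEpsilon.constructive_indefinite_description _ (Hex c)).

Definition qsel x := proj1_sig (ClassicalEpsilon.constructive_indefinite_description _ (hrep x)).
Lemma qselP x : Rep x (qsel x).
Proof. exact: (proj2_sig (ClassicalEpsilon.constructive_indefinite_description _ (hrep x))). Qed.

Definition LL (F : B -> I -> I) (qs : seq (B * I)) := [seq (c `&` q.1, F c q.2) | c <- ats, q <- qs].

Lemma part_LL F qs : part (map fst qs) -> part (map fst (LL F qs)).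
Proof. by move=> h; rewrite /LL map_fst_allp; apply: part_allpairs. Qed.

Lemma LL_mem F qs r : r \in LL F qs ->
  exists c q, [/\ c \in ats, q \in qs & r = (c `&` q.1, F c q.2)].
Proof. by case/allpairsP => [[c q] /= [hc hq ->]]; exists c, q. Qed.

Lemma cond_LL F qs (psiA psiB : I -> I) :
  (forall c q, q \in qs -> c \in ats -> c `&` q.1 != \bot -> Aset (Ec c) P z psiA q.2) ->
  (forall c i, c \in ats -> Aset (Ec c) P z psiA i -> Aset (Ec c) P z psiB (F c i)) ->
  forall r c', r \in LL F qs -> c' \in ats -> c' `&` r.1 != \bot -> Aset (Ec c') P z psiB r.2.
Proof.
move=> hA hF r c' /LL_mem [c [q [hc hq ->]]] hc' /= hne.
case: (eqVneq c' c) => [e|ne].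
  subst c'; apply: hF => //; apply: hA => //.
  by move: hne; rewrite meetA meetxx.
move: hne; have -> : c' `&` (c `&` q.1) = \bot.
  by rewrite meetA (pdisj_mem hats.1 hc' hc ne) meet0x.
by rewrite eqxx.
Qed.

Lemma LL_rep F qs x c q : Rep x (LL F qs) -> c \in ats -> q \in qs ->
  (c `&` q.1) `&` d x (g (F c q.2)) = \bot.
Proof.
move=> [_ h] hc hq; apply: (h (c `&` q.1, F c q.2)).
by apply/allpairsP; exists (c, q).
Qed.

Lemma Gex x : perp d o V1 x -> exists y, Rep y (LL H (qsel x)) /\ perp d o V2 y.
Proof.
move=> hx; have [y hy] := hbuild (part_LL H (qselP x).1).
exists y; split => //.
apply: (L2 (V := V2) (psi := phi) hV2r hz2 hy).
apply: (cond_LL (psiA := fun x => x)).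
- move=> c q hq hc hne.
  exact: (L1 (V := V1) (psi := fun x => x) hV1g hx (qselP x) hq hc hne).
- by move=> c i hc hi; case: (HP c) => h1 _ _; apply: h1.
Qed.

Definition Gf (x : {x | perp d o V1 x}) : {y | perp d o V2 y} :=
  let e := ClassicalEpsilon.constructive_indefinite_description _ (Gex (proj2_sig x)) in
  exist _ (proj1_sig e) (proj2 (proj2_sig e)).

Lemma GfP x : Rep (proj1_sig (Gf x)) (LL H (qsel (proj1_sig x))).
Proof. exact: (proj1 (proj2_sig (ClassicalEpsilon.constructive_indefinite_description _ (Gex (proj2_sig x))))). Qed.

Lemma dbot x y : d x y = \bot -> x = y.
Proof. by case: hd => _ h _; case: (h x y). Qed.

Lemma pi_le (a b c : B) : [/\ (b `&` a) `&` c <= a, (b `&` a) `&` c <= b,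
  (b `&` a) `&` c <= c, (b `&` a) `&` c <= c `&` a & (b `&` a) `&` c <= c `&` b].
Proof.
have h1 : (b `&` a) `&` c <= a by rewrite meetAC; exact: leIr.
have h2 : (b `&` a) `&` c <= b by rewrite -meetA; exact: leIl.
have h3 : (b `&` a) `&` c <= c by exact: leIr.
by split => //; rewrite lexI ?h1 ?h2 h3.
Qed.

Lemma G_iso x1 x2 : d (proj1_sig (Gf x1)) (proj1_sig (Gf x2)) = d (proj1_sig x1) (proj1_sig x2).
Proof.
apply: (local_eq hats.2) => c hc.
apply: (local_eq (qselP (proj1_sig x1)).1.2) => b1 /mapP [q1 hq1 ->].
apply: (local_eq (qselP (proj1_sig x2)).1.2) => b2 /mapP [q2 hq2 ->].
rewrite !meetA; set pi := (q2.1 `&` q1.1) `&` c.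
have [l1 l2 l3 l4 l5] := pi_le q1.1 q2.1 c.
have f1 := meet_le_bot ((qselP (proj1_sig x1)).2 q1 hq1) l1.
have f2 := meet_le_bot ((qselP (proj1_sig x2)).2 q2 hq2) l2.
have f3 := meet_le_bot (LL_rep (GfP x1) hc hq1) l4.
have f4 := meet_le_bot (LL_rep (GfP x2) hc hq2) l5.
rewrite (transl hd _ f3) (transr hd _ f4) (transl hd _ f1) (transr hd _ f2).
case: (eqVneq pi \bot) => hpi; first by move: hpi; rewrite /pi => ->; rewrite !meet0x.
have hc1 : c `&` q1.1 != \bot by apply: contraNneq hpi => e; apply/eqP; exact: bot_le l4 e.
have hc2 : c `&` q2.1 != \bot by apply: contraNneq hpi => e; apply/eqP; exact: bot_le l5 e.
have A1 := L1 (V := V1) (psi := fun x => x) hV1g (proj2_sig x1) (qselP _) hq1 hc hc1.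
have A2 := L1 (V := V1) (psi := fun x => x) hV1g (proj2_sig x2) (qselP _) hq2 hc hc2.
rewrite !(piece _ _ hc l3).
by case: (HP c) => _ h2 _; rewrite h2.
Qed.

Lemma G_inj : injective Gf.
Proof.
move=> x1 x2 e; apply: sig_eq; apply: dbot.
by rewrite -G_iso e dxx.
Qed.

Lemma Kex c w : exists i, Aset (Ec c) P z phi w ->
  Aset (Ec c) P z (fun x => x) i /\ Ec c (H c i) w.
Proof.
case: (boolP (Aset (Ec c) P z phi w)) => hw.
  by case: (HP c) => _ _ h3; case: (h3 w hw) => i hi he; exists i.
by exists z.
Qed.

Definition K c w := proj1_sig (ClassicalEpsilon.constructive_indefinite_description _ (Kex c w)).
Lemma KP c w : Aset (Ec c) P z phi w ->
  Aset (Ec c) P z (fun x => x) (K c w) /\ Ec c (H c (K c w)) w.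
Proof. exact: (proj2_sig (ClassicalEpsilon.constructive_indefinite_description _ (Kex c w))). Qed.

Lemma G_surj (y : {y | perp d o V2 y}) : exists x, Gf x = y.
Proof.
set yv := proj1_sig y.
have [x hx] := hbuild (part_LL K (qselP yv).1).
have hxp : perp d o V1 x.
  apply: (L2 (V := V1) (psi := fun x => x) hV1r' hz1 hx).
  apply: (cond_LL (psiA := phi)).
  - move=> c q hq hc hne.
    exact: (L1 (V := V2) (psi := phi) hV2g (proj2_sig y) (qselP _) hq hc hne).
  - by move=> c i hc hi; case: (KP hi).
exists (exist _ x hxp); apply: sig_eq; apply: dbot => /=.
set xx := exist _ x hxp.
apply: (local_eq hats.2 (v := \bot)) => c hc.
apply: (local_eq (qselP x).1.2) => b1 /mapP [q1 hq1 ->].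
apply: (local_eq (qselP yv).1.2) => b2 /mapP [q2 hq2 ->].
rewrite !meetA !meetx0; set pi := (q2.1 `&` q1.1) `&` c.
have [l1 l2 l3 l4 l5] := pi_le q1.1 q2.1 c.
have f1 := meet_le_bot ((qselP x).2 q1 hq1) l1.
have f2 := meet_le_bot ((qselP yv).2 q2 hq2) l2.
have f3 := meet_le_bot (LL_rep (GfP xx) hc hq1) l4.
have f4 := meet_le_bot (LL_rep hx hc hq2) l5.
case: (eqVneq pi \bot) => hpi; first by move: hpi; rewrite /pi => ->; rewrite !meet0x.
have hc1 : c `&` q1.1 != \bot by apply: contraNneq hpi => e; apply/eqP; exact: bot_le l4 e.
have hc2 : c `&` q2.1 != \bot by apply: contraNneq hpi => e; apply/eqP; exact: bot_le l5 e.
have A1 := L1 (V := V1) (psi := fun x => x) hV1g hxp (qselP _) hq1 hc hc1.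
have A2 := L1 (V := V2) (psi := phi) hV2g (proj2_sig y) (qselP _) hq2 hc hc2.
have [K1 K2] := KP A2.
have e1 : pi `&` d (g q1.2) (g (K c q2.2)) = \bot by rewrite -(transl hd _ f1) f4.
have E1 : Ec c q1.2 (K c q2.2).
  move: e1; rewrite (piece _ _ hc l3); case: (Ec c _ _) => // e.
  by move/eqP: e; rewrite -/pi (negbTE hpi).
have E2 : Ec c (H c q1.2) q2.2.
  apply: Ec_trans K2; case: (HP c) => _ h2 _; by rewrite h2.
by rewrite (transl hd _ f3) (transr hd _ f2) (piece _ _ hc l3) E2.
Qed.

Lemma G_isometric : isometric d (perp d o V1) (perp d o V2).
Proof.
exists Gf; split; last exact: G_iso.
pose Ginv y := proj1_sig (ClassicalEpsilon.constructive_indefinite_description _ (G_surj y)).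
have GinvP : forall y, Gf (Ginv y) = y.
  move=> y; exact: (proj2_sig (ClassicalEpsilon.constructive_indefinite_description _ (G_surj y))).
exists Ginv => [x|y]; last exact: GinvP.
by apply: G_inj; rewrite GinvP.
Qed.

End Main.

Lemma In_nth (A : Type) (x0 : A) (l : seq A) s : List.In s l ->
  exists n, (n < size l)%N /\ nth x0 l n = s.
Proof.
elim: l => [|a l IH] //= [<-|h]; first by exists 0%N.
by case: (IH h) => n [hn e]; exists n.+1.
Qed.

Lemma mem_In_map (A : eqType) (C : Type) (F : A -> C) q qs : q \in qs -> List.In (F q) (map F qs).
Proof. elim: qs => [|a qs IH] //=; rewrite inE => /orP [/eqP->|h]; [left|right] => //; exact: IH. Qed.

Lemma nth_prop (A : Type) (Q : A -> Prop) x0 (l : seq A) : Q x0 ->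
  (forall s, List.In s l -> Q s) -> forall n, Q (nth x0 l n).
Proof.
move=> h0; elim: l => [|a l IH] hl n /=; first by rewrite nth_nil.
case: n => [|n] /=; first by apply: hl; left.
by apply: IH => s hs; apply: hl; right.
Qed.

Lemma lift_ps (B : eqType) (I : eqType) (T : Type) (gam : I -> T) (Q : I -> Prop) (ps : seq (B * T)) :
  (forall p, List.In p ps -> exists i, Q i /\ gam i = p.2) ->
  exists qs : seq (B * I), ps = [seq (q.1, gam q.2) | q <- qs] /\ forall q, q \in qs -> Q q.2.
Proof.
elim: ps => [|p ps IH] h; first by exists [::].
case: (h p (or_introl erefl)) => i [hi ei].
case: IH => [q hq|qs [e hqs]]; first by apply: h; right.
exists ((p.1, i) :: qs); split; first by rewrite /= -e ei; case: p {h ei}.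
by move=> q; rewrite inE => /orP [/eqP->|]; [|exact: hqs].
Qed.

Lemma map_fst_pairs (B : Type) (I : Type) (T : Type) (F : I -> T) (qs : seq (B * I)) :
  map fst [seq (q.1, F q.2) | q <- qs] = map fst qs.
Proof. by elim: qs => //= q qs ->. Qed.

Theorem theorem3p1 (disp : Order.disp_t) (B : ctbDistrLatticeType disp)
  (T : Type) (d : T -> T -> B) (o : T)
  (hd : bool_metric d) (hX : CFG d (fun _ => True))
  (U1 U2 : T -> Prop) (hU1 : CFG d U1) (hU2 : CFG d U2)
  (h01 : U1 o) (h02 : U2 o) :
  isometric d U1 U2 -> isometric d (perp d o U1) (perp d o U2).
Proof.
move=> [f [hbij hiso]].
case: hX => hXc [S [_ hS]].
case: (hU1) => _ [S1 [hS1 hS1r]].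
case: hbij => finv finvK fK.
pose u0 := finv (exist _ o h02).
have fu0 : f u0 = exist _ o h02 by rewrite /u0 fK.
pose S1' := o :: proj1_sig u0 :: S1.
have hS1' : forall n, U1 (nth o S1' n).
  apply: nth_prop => // s [<-|[<-|hs]] //; [exact: proj2_sig | exact: hS1].
pose m := size S. pose k := (size S1).+2.
pose Ix : finType := (('I_m + 'I_k) + 'I_k)%type.
pose g1 (j : 'I_k) : {x | U1 x} := exist _ (nth o S1' j) (hS1' j).
pose gam (i : Ix) : T := match i with
  | inl (inl a) => nth o S a | inl (inr j) => nth o S1' j | inr j => proj1_sig (f (g1 j)) end.
pose P : pred Ix := fun i => if i is inl (inr _) then true else false.
pose phi (i : Ix) : Ix := if i is inl (inr j) then inr j else i.
pose z : Ix := inl (inr ord0).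
pose p1 : Ix := inl (inr (Ordinal (n:=k) (m:=1) isT)).
pose es := [seq d (gam i) (gam j) | i <- enum Ix, j <- enum Ix].
have hatom : forall c, c \in atoms es -> forall i j,
    d (gam i) (gam j) `&` c = \bot \/ d (gam i) (gam j) `&` c = c.
  move=> c hc i j; apply: atoms_prop hc; apply/allpairsP; exists (i, j).
  by rewrite !mem_enum.
have gz : gam z = o by [].
have Pz : P z by [].
have Pp1 : P p1 by [].
have gp1 : gam (phi p1) = o.
  rewrite /= (_ : g1 _ = u0) ?fu0 //; exact: sig_eq.
have hphi : forall a b, P a -> P b -> d (gam (phi a)) (gam (phi b)) = d (gam a) (gam b).
  by move=> [[a|a]|a] [[b|b]|b] //= _ _; exact: hiso.
have repOf : forall x ps qs, bpartition (map fst ps) -> convex_comb d x ps ->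
    ps = [seq (q.1, gam q.2) | q <- qs] -> Rep d gam x qs.
  move=> x ps qs hp hc e; split.
    by apply/bpart_part; move: hp; rewrite e map_fst_pairs.
  move=> q hq; apply: (hc (q.1, gam q.2)); rewrite e.
  exact: (mem_In_map (fun q => (q.1, gam q.2))).
have hbuild : forall qs : seq (B * Ix), part (map fst qs) -> exists x, Rep d gam x qs.
  move=> qs hq.
  have [|//|x [_ hx]] := hXc [seq (q.1, gam q.2) | q <- qs].
    by apply/bpart_part; rewrite map_fst_pairs.
  by exists x; apply: repOf hx erefl; apply/bpart_part; rewrite map_fst_pairs.
have hrep : forall x, exists qs, Rep d gam x qs.
  move=> x; case: (hS x I) => ps [hp hin hcc].
  have [|qs [e _]] := lift_ps (B := B) (gam := gam) (Q := fun _ => True) (ps := ps).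
    move=> p /hin /(In_nth o) [n [hn en]].
    by exists (inl (inl (Ordinal hn))).
  by exists qs; apply: repOf hcc e.
have hV1g : forall p, P p -> U1 (gam p) by move=> [[a|a]|a] //= _; exact: hS1'.
have hV2g : forall p, P p -> U2 (gam (phi p)) by move=> [[a|a]|a] //= _; exact: proj2_sig.
have hV1r : forall u, U1 u -> exists qs, Rep d gam u qs /\ forall q, q \in qs -> P q.2.
  move=> u hu; case: (hS1r u hu) => ps [hp hin hcc].
  have [|qs [e hq]] := lift_ps (B := B) (gam := gam) (Q := P) (ps := ps).
    move=> p /hin /(In_nth o) [n [hn en]].
    have hn' : (n.+2 < k)%N by [].
    by exists (inl (inr (Ordinal hn'))).
  by exists qs; split => //; apply: repOf hcc e.
have hV2r : forall u, U2 u -> exists qs,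
    Rep d gam u [seq (q.1, phi q.2) | q <- qs] /\ forall q, q \in qs -> P q.2.
  move=> u hu; pose u' := finv (exist _ u hu).
  have fu : f u' = exist _ u hu by rewrite /u' fK.
  case: (hV1r _ (proj2_sig u')) => qs [[hp hl] hq].
  exists qs; split => //; split; first by rewrite map_fst_pairs.
  move=> q' /mapP [q qin ->] /=.
  have := hl q qin; have := hq q qin.
  case: q {qin} => b [[a|j]|a] //= _.
  have -> : u = proj1_sig (f u') by rewrite fu.
  by rewrite hiso.
exact: (G_isometric hd (part_atoms es) hatom gz Pz Pp1 gp1 hphi hbuild hrep hV1g hV2g hV1r hV2r).
Qed.
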